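(* Let $t$ be any integer and $G_j=G_j(a,b)$ a gibonacci sequence. If $p$ is a non-negative integer, then \[ \sum_{n=0}^\infty\binom{n+p}{p}\frac{H_nG_{n+t}}{2^n}=(H_p+\ln2)2^{p+1}G_{t+2p+2}+\frac{2^{p+2}}{\sqrt5}\bigl(G_{t+2p+3}+G_{t+2p+1}\bigr)\ln\alpha-2^{p+1}\sum_{k=1}^p\frac{G_{t+2p-2k+2}}{2^kk}. \] If $p$ is a non-negative even integer, then \begin{align*} \sum_{n=0}^\infty(-1)^n\binom{n+p}{p}\frac{H_nG_{n+t}}{2^n}&=\Bigl(\frac2{\sqrt5}\Bigr)^{p+1}\left(\frac{H_p-\ln(\sqrt5/2)}{\sqrt5}\bigl(G_{t-p}+G_{t-p-2}\bigr)-G_{t-p-1}\ln\alpha\right)\\ &\quad-\sum_{k=1}^{p/2}\frac{(4/5)^{p/2-k}}{5k}\left(G_{t+2k-p}+\frac{6k-1}{2k-1}G_{t+2k-p-2}\right), \end{align*} while if $p$ is an odd positive integer, then \begin{align*} \sum_{n=0}^\infty(-1)^n\binom{n+p}{p}\frac{H_nG_{n+t}}{2^n}&=\Bigl(\frac2{\sqrt5}\Bigr)^{p+1}\left(\bigl(H_p-\ln(\sqrt5/2)\bigr)G_{t-p-1}-\frac{\ln\alpha}{\sqrt5}\bigl(G_{t-p}+G_{t-p-2}\bigr)\right)\\ &\quad-\frac8{25}\sum_{k=1}^{(p-1)/2}\frac{(4/5)^{(p-1)/2-k}}{2k-1}\left(\frac{14k-5}{4k}G_{t+2k-p-1}+G_{t+2k-p-3}\right)-\frac{2(G_t+G_{t-2})}{5p}.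 \end{align*}
   Context: $H_n=\sum_{j=1}^n\frac1j$ ($H_0=0$). $\alpha=(1+\sqrt5)/2$, $\beta=-1/\alpha$. For numbers $a,b$ not both zero, the gibonacci sequence $G_j=G_j(a,b)$ is defined by $G_0=a$, $G_1=b$, $G_j=G_{j-1}+G_{j-2}$, extended to negative indices by $G_{-j}=G_{-(j-2)}-G_{-(j-1)}$; equivalently $G_j=\frac{(b-a\beta)\alpha^j+(a\alpha-b)\beta^j}{\alpha-\beta}$. Empty sums are $0$. *)

(* Defs.v *)
From Stdlib Require Import Reals ZArith Arith.
From Coquelicot Require Import Coquelicot.
Open Scope R_scope.

Fixpoint harm (n : nat) : R :=
  match n with
  | O => 0
  | S m => harm m + / INR (S m)
  end.

Definition binom (n k : nat) : R := Binomial.C n k.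

(* (G_n, G_{n+1}) for n >= 0 *)
Fixpoint gib_pos (a b : R) (n : nat) : R * R :=
  match n with
  | O => (a, b)
  | S m => let (x, y) := gib_pos a b m in (y, x + y)
  end.

(* (G_{-n}, G_{-n+1}) for n >= 0, using G_{-n-1} = G_{-n+1} - G_{-n} *)
Fixpoint gib_neg (a b : R) (n : nat) : R * R :=
  match n with
  | O => (a, b)
  | S m => let (x, y) := gib_neg a b m in (y - x, x)
  end.

Definition gib (a b : R) (j : Z) : R :=
  match j with
  | Z0 => a
  | Zpos q => fst (gib_pos a b (Pos.to_nat q))
  | Zneg q => fst (gib_neg a b (Pos.to_nat q))
  end.

Definition alpha : R := (1 + sqrt 5) / 2.

(* Main.v *)
Require Import Defs.
From Stdlib Require Import Reals ZArith Arith Lra Lia FunctionalExtensionality.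
From Coquelicot Require Import Coquelicot.
Open Scope R_scope.


Lemma geom_conv (x W : R) (w u : nat -> R) :
  Rabs x < 1 -> is_series w W -> ex_series (fun n => Rabs (w n)) ->
  u 0%nat = w 0%nat -> (forall n, u (S n) = x * u n + w (S n)) ->
  is_series u (W / (1 - x)) /\ ex_series (fun n => Rabs (u n)).
Proof.
  intros Hx HW HWa H0 HS.
  assert (Hu : forall n, u n = sum_f_R0 (fun k => w k * x ^ (n - k)) n).
  { induction n as [|n IH].
    - simpl. rewrite H0. ring.
    - rewrite HS, IH. rewrite tech5. cbv beta. rewrite Nat.sub_diag, pow_O.
      rewrite scal_sum, Rmult_1_r. f_equal. apply sum_eq. intros i Hi.
      replace (S n - i)%nat with (S (n - i)) by lia. simpl pow. ring. }
  assert (Hg : is_series (fun n => x ^ n) (/ (1 - x))) by (apply is_series_geom; auto).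
  assert (Hga : ex_series (fun n => Rabs (x ^ n))).
  { exists (/ (1 - Rabs x)). eapply is_series_ext; [|apply is_series_geom].
    intros n. apply RPow_abs. rewrite Rabs_Rabsolu. auto. }
  split.
  - eapply is_series_ext. intros n. symmetry. apply Hu.
    unfold Rdiv. apply is_series_mult; auto.
  - destruct HWa as [SWa HSWa]. destruct Hga as [Sga HSga].
    assert (Hm := is_series_mult (fun n => Rabs (w n)) (fun n => Rabs (x ^ n)) _ _ HSWa HSga).
    apply (@ex_series_le R_AbsRing R_CompleteNormedModule) with (b := fun n => sum_f_R0 (fun k => Rabs (w k) * Rabs (x ^ (n - k))) n).
    + intros n. change norm with Rabs. rewrite Rabs_Rabsolu, Hu.
      eapply Rle_trans. apply sum_f_R0_triangle. right. apply sum_eq. intros; apply Rabs_mult.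
    + exists (SWa * Sga). apply Hm.
      * eapply ex_series_ext; [|exists SWa; apply HSWa]. intros; simpl. now rewrite Rabs_Rabsolu.
      * eapply ex_series_ext; [|exists Sga; apply HSga]. intros; simpl. now rewrite Rabs_Rabsolu.
Qed.

Definition lc (n : nat) : R := match n with O => 0 | S k => / INR (S k) end.

Lemma pow_le1 (r : R) (n : nat) : 0 <= r <= 1 -> 0 <= r ^ n <= 1.
Proof. intros H. induction n; simpl; nra. Qed.

Lemma lc_cv (x : R) : Rabs x < 1 -> Rbar_lt (Rabs x) (CV_radius lc).
Proof.
  intros Hx. set (r := (Rabs x + 1) / 2).
  assert (Hr : Rbar_le r (CV_radius lc)).
  { apply (proj1 (CV_radius_bounded lc)). exists 1. intros n.
    assert (0 <= Rabs x) by apply Rabs_pos.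
    assert (Hp := pow_le1 r n ltac:(unfold r; lra)). rewrite Rabs_mult.
    assert (Rabs (lc n) <= 1).
    { destruct n. unfold lc. rewrite Rabs_R0; lra.
      unfold lc. pose proof (le_INR 1 (S n) ltac:(lia)) as Ha. set (a := INR (S n)) in *.
      simpl in Ha. rewrite Rabs_right. rewrite <- Rinv_1. apply Rinv_le_contravar; lra.
      left. apply Rinv_0_lt_compat. lra. }
    rewrite (Rabs_right (r ^ n)) by lra.
    assert (0 <= Rabs (lc n)) by apply Rabs_pos.
    unfold r in *; nra. }
  assert (Rabs x < r) by (unfold r; lra).
  destruct (CV_radius lc); simpl in *; lra.
Qed.

Lemma log_series (x : R) : Rabs x < 1 -> is_series (fun n => lc n * x ^ n) (- ln (1 - x)).
Proof.
  intros Hx.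
  assert (Hd : forall t, Rabs t < 1 -> is_derive (fun t => PSeries lc t + ln (1 - t)) t 0).
  { intros t Ht.
    assert (H1 := is_derive_PSeries lc t (lc_cv t Ht)).
    assert (E : PSeries (PS_derive lc) t = / (1 - t)).
    { rewrite (PSeries_ext _ (fun _ => 1)).
      - apply is_pseries_unique. apply is_pseries_R.
        eapply is_series_ext; [|apply is_series_geom; auto]. intros; simpl; ring.
      - intros n. unfold PS_derive, lc. field. apply not_0_INR. lia. }
    rewrite E in H1.
    assert (H2 : is_derive (fun t => ln (1 - t)) t (- / (1 - t))).
    { auto_derive. apply Rabs_def2 in Ht. lra. field. apply Rabs_def2 in Ht. lra. }
    assert (H3 := is_derive_plus _ _ _ _ _ H1 H2).
    replace 0 with (plus (/ (1 - t)) (- / (1 - t))). exact H3.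
    unfold plus; simpl. ring. }
  assert (Hx0 : PSeries lc x + ln (1 - x) = 0).
  { assert (E0 : PSeries lc 0 + ln (1 - 0) = 0).
    { rewrite PSeries_0. simpl. replace (1 - 0) with 1 by ring. rewrite ln_1. ring. }
    apply Rabs_def2 in Hx.
    destruct (Rtotal_order x 0) as [Hlt|[Heq|Hgt]].
    - rewrite <- E0. apply (eq_is_derive (fun t => PSeries lc t + ln (1 - t))); [|lra].
      intros t Ht. apply Hd. apply Rabs_def1; lra.
    - subst. exact E0.
    - rewrite <- E0. symmetry. apply (eq_is_derive (fun t => PSeries lc t + ln (1 - t))); [|lra].
      intros t Ht. apply Hd. apply Rabs_def1; lra. }
  replace (- ln (1 - x)) with (PSeries lc x) by lra.
  apply is_pseries_R. apply PSeries_correct. apply CV_radius_inside. apply lc_cv; auto.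
Qed.

Lemma binom_nn (p : nat) : binom (0 + p) p = 1.
Proof.
  unfold binom, Binomial.C. simpl plus. rewrite Nat.sub_diag. simpl Factorial.fact.
  change (INR 1) with 1. pose proof (INR_fact_neq_0 p). field. auto.
Qed.

Lemma binom_n0 (n : nat) : binom (n + 0) 0 = 1.
Proof.
  unfold binom, Binomial.C. rewrite Nat.add_0_r, Nat.sub_0_r. simpl Factorial.fact.
  change (INR 1) with 1. pose proof (INR_fact_neq_0 n). field. auto.
Qed.

Lemma binom_pascal (n p : nat) :
  binom (S n + S p) (S p) = binom (n + S p) (S p) + binom (S n + p) p.
Proof.
  unfold binom. rewrite Rplus_comm. replace (S n + p)%nat with (n + S p)%nat by lia.
  replace (S n + S p)%nat with (S (n + S p)) by lia. rewrite <- pascal by lia. ring.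
Qed.

Lemma binom_harm (n p : nat) :
  binom (n + S p) (S p) * / INR (S n) = binom (S n + p) p * / INR (S p).
Proof.
  unfold binom, Binomial.C.
  replace (n + S p - S p)%nat with n by lia.
  replace (S n + p - p)%nat with (S n) by lia.
  replace (S n + p)%nat with (n + S p)%nat by lia.
  change (Factorial.fact (S p)) with (S p * Factorial.fact p)%nat.
  change (Factorial.fact (S n)) with (S n * Factorial.fact n)%nat.
  rewrite !mult_INR.
  assert (INR (S n) <> 0) by (apply not_0_INR; lia).
  assert (INR (S p) <> 0) by (apply not_0_INR; lia).
  pose proof (INR_fact_neq_0 n). pose proof (INR_fact_neq_0 p).
  field; auto.
Qed.

Fixpoint Sy (p : nat) (y : R) : R :=
  match p with O => 0 | S q => y * Sy q y + y / INR (S q) end.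

Definition Fc (p : nat) (x : R) : R :=
  (harm p + ln (/ (1 - x))) * (/ (1 - x)) ^ (p + 1) - Sy p (/ (1 - x)).

Lemma is_series_ext_R (a b : nat -> R) (l : R) :
  (forall n, a n = b n) -> is_series a l -> is_series b l.
Proof. apply is_series_ext. Qed.

Lemma geom_abs (x : R) : Rabs x < 1 -> ex_series (fun n => Rabs (x ^ n)).
Proof.
  intros Hx. exists (/ (1 - Rabs x)). eapply is_series_ext; [|apply is_series_geom].
  intros n. apply RPow_abs. rewrite Rabs_Rabsolu. auto.
Qed.

Lemma series_B (x : R) (p : nat) : Rabs x < 1 ->
  is_series (fun n => binom (n + p) p * x ^ n) ((/ (1 - x)) ^ (p + 1))
  /\ ex_series (fun n => Rabs (binom (n + p) p * x ^ n)).
Proof.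
  intros Hx. induction p as [|p [IH1 IH2]].
  - split.
    + replace ((/ (1 - x)) ^ (0 + 1)) with (/ (1 - x)) by (simpl; ring).
      eapply is_series_ext; [|apply is_series_geom; auto].
      intros n. now rewrite binom_n0, Rmult_1_l.
    + eapply ex_series_ext; [|apply geom_abs, Hx]. intros n. now rewrite binom_n0, Rmult_1_l.
  - destruct (geom_conv x _ _ (fun n => binom (n + S p) (S p) * x ^ n) Hx IH1 IH2) as [G1 G2].
    + rewrite !binom_nn. reflexivity.
    + intros n. rewrite binom_pascal. simpl pow. ring.
    + split; auto. replace ((/ (1 - x)) ^ (S p + 1)) with ((/ (1 - x)) ^ (p + 1) / (1 - x)); auto.
      replace (S p + 1)%nat with (S (p + 1)) by lia. simpl. unfold Rdiv. ring.
Qed.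

Lemma series_F (x : R) (p : nat) : Rabs x < 1 ->
  is_series (fun n => binom (n + p) p * harm n * x ^ n) (Fc p x)
  /\ ex_series (fun n => Rabs (binom (n + p) p * harm n * x ^ n)).
Proof.
  intros Hx. assert (Hx' := Hx). apply Rabs_def2 in Hx'.
  assert (Hy : / (1 - x) <> 0) by (apply Rinv_neq_0_compat; lra).
  induction p as [|p [IH1 IH2]].
  - assert (Hw : ex_series (fun n => Rabs (lc n * x ^ n))).
    { apply (@ex_series_le R_AbsRing R_CompleteNormedModule) with (b := fun n => Rabs (x ^ n)).
      2: apply geom_abs, Hx.
      intros n. change norm with Rabs. rewrite Rabs_Rabsolu, Rabs_mult.
      assert (0 <= Rabs (x ^ n)) by apply Rabs_pos.
      assert (Rabs (lc n) <= 1).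
      { destruct n. unfold lc. rewrite Rabs_R0; lra.
        unfold lc. pose proof (le_INR 1 (S n) ltac:(lia)) as Ha. set (a := INR (S n)) in *.
        simpl in Ha. rewrite Rabs_right. rewrite <- Rinv_1. apply Rinv_le_contravar; lra.
        left. apply Rinv_0_lt_compat. lra. }
      nra. }
    destruct (geom_conv x _ _ (fun n => binom (n + 0) 0 * harm n * x ^ n) Hx (log_series x Hx) Hw)
      as [G1 G2].
    + rewrite binom_n0. simpl. ring.
    + intros n. rewrite !binom_n0. unfold lc. cbn [harm]. simpl pow. field.
      apply not_0_INR; lia.
    + split; auto. replace (Fc 0 x) with (- ln (1 - x) / (1 - x)); auto.
      unfold Fc. rewrite ln_Rinv by lra. cbn [harm Sy]. simpl pow. unfold Rdiv. ring.
  - destruct (series_B x p Hx) as [B1 B2].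
    set (y := / (1 - x)) in *.
    set (c := / INR (S p)).
    assert (W1 : is_series (fun n => binom (n + p) p * harm n * x ^ n + c * (binom (n + p) p * x ^ n))
                   (Fc p x + c * y ^ (p + 1)))
      by exact (is_series_plus _ _ _ _ IH1 (is_series_scal c _ _ B1)).
    assert (W2 : ex_series (fun n => Rabs (binom (n + p) p * harm n * x ^ n + c * (binom (n + p) p * x ^ n)))).
    { apply (@ex_series_le R_AbsRing R_CompleteNormedModule)
        with (b := fun n => Rabs (binom (n + p) p * harm n * x ^ n) + Rabs c * Rabs (binom (n + p) p * x ^ n)).
      - intros n. change norm with Rabs. rewrite Rabs_Rabsolu, <- Rabs_mult. apply Rabs_triang.
      - apply (@ex_series_plus R_AbsRing R_NormedModule); auto.
        apply (@ex_series_scal R_AbsRing R_NormedModule); auto. }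
    destruct (geom_conv x _ _ (fun n => binom (n + S p) (S p) * harm n * x ^ n + c * x ^ n) Hx W1 W2)
      as [G1 G2].
    + rewrite !binom_nn. simpl. ring.
    + intros n. rewrite binom_pascal. cbn [harm].
      assert (E := binom_harm n p). fold c in E.
      transitivity (x * (binom (n + S p) (S p) * harm n * x ^ n + c * x ^ n) +
        (binom (S n + p) p * (harm n + / INR (S n)) * x ^ S n + c * (binom (S n + p) p * x ^ S n))
        + x ^ S n * (binom (n + S p) (S p) * / INR (S n) - binom (S n + p) p * c)).
      * simpl pow. ring.
      * rewrite E. ring.
    + assert (G3 : is_series (fun n => binom (n + S p) (S p) * harm n * x ^ n + c * x ^ n - c * x ^ n)
                     ((Fc p x + c * y ^ (p + 1)) / (1 - x) - c * / (1 - x)))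
        by exact (is_series_minus _ _ _ _ G1 (is_series_scal c _ _ (is_series_geom x Hx))).
      split.
      * replace (Fc (S p) x) with ((Fc p x + c * y ^ (p + 1)) / (1 - x) - c * / (1 - x)).
        -- eapply is_series_ext_R; [|apply G3]. intros n. cbv beta. ring.
        -- unfold Fc. fold y. cbn [harm Sy]. replace (S p + 1)%nat with (S (p + 1)) by lia.
           simpl pow. unfold Rdiv. fold y. unfold c. ring.
      * apply (@ex_series_le R_AbsRing R_CompleteNormedModule)
          with (b := fun n => Rabs (binom (n + S p) (S p) * harm n * x ^ n + c * x ^ n) + Rabs c * Rabs (x ^ n)).
        -- intros n. change norm with Rabs. rewrite Rabs_Rabsolu, <- Rabs_mult.
           replace (binom (n + S p) (S p) * harm n * x ^ n) with
             ((binom (n + S p) (S p) * harm n * x ^ n + c * x ^ n) + (- (c * x ^ n))) at 1 by ring.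
           eapply Rle_trans. apply Rabs_triang. rewrite Rabs_Ropp. lra.
        -- apply (@ex_series_plus R_AbsRing R_NormedModule); auto.
           apply (@ex_series_scal R_AbsRing R_NormedModule); auto. apply geom_abs, Hx.
Qed.


Ltac toR := match goal with |- ?a = ?b => change (@eq R a b) end.

Lemma sum_ext_R (a b : nat -> R) (n m : nat) :
  (forall k, (n <= k <= m)%nat -> a k = b k) -> sum_n_m a n m = sum_n_m b n m.
Proof. apply sum_n_m_ext_loc. Qed.

Lemma sum_mult_R (c : R) (u : nat -> R) (n m : nat) :
  sum_n_m (fun k => c * u k) n m = c * sum_n_m u n m.
Proof. apply (sum_n_m_mult_l (K := R_Ring)). Qed.

Lemma sum_Sm_R (a : nat -> R) (n m : nat) :
  (n <= S m)%nat -> sum_n_m a n (S m) = sum_n_m a n m + a (S m).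
Proof. intros H. exact (sum_n_Sm (G := R_AbelianMonoid) a n m H). Qed.

Lemma Sy_sum (p : nat) (y : R) :
  Sy p y = sum_n_m (fun k => y ^ (p + 1 - k) / INR k) 1 p.
Proof.
  induction p as [|p IH].
  - rewrite sum_n_m_zero by lia. reflexivity.
  - rewrite sum_Sm_R by lia. cbn [Sy]. rewrite IH.
    rewrite (sum_ext_R (fun k => y ^ (S p + 1 - k) / INR k) (fun k => Rmult y (y ^ (p + 1 - k) / INR k))).
    + rewrite sum_mult_R.
      replace (S p + 1 - S p)%nat with 1%nat by lia. rewrite pow_1. reflexivity.
    + intros k Hk. replace (S p + 1 - k)%nat with (S (p + 1 - k)) by lia.
       simpl pow. unfold Rdiv. ring.
Qed.

Lemma INR_S' (n : nat) : INR (S n) = INR n + 1.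
Proof. apply S_INR. Qed.

Lemma even_sum (y z : R) (m : nat) : y * y = 4 * z / 5 -> y = 2 * (1 + z) / 5 ->
  sum_n_m (fun k => (4 / 5) ^ (m - k) / (5 * INR k)
     * (z ^ (m - k) + (6 * INR k - 1) / (2 * INR k - 1) * z ^ (m - k + 1))) 1 m
  = Sy (2 * m) y.
Proof.
  intros Hy2 Hy. induction m as [|m IH].
  - rewrite sum_n_m_zero by lia. reflexivity.
  - rewrite sum_Sm_R by lia.
    rewrite (sum_ext_R (fun k => (4 / 5) ^ (S m - k) / (5 * INR k)
     * (z ^ (S m - k) + (6 * INR k - 1) / (2 * INR k - 1) * z ^ (S m - k + 1))) (fun k => Rmult (4 * z / 5) ((4 / 5) ^ (m - k) / (5 * INR k)
     * (z ^ (m - k) + (6 * INR k - 1) / (2 * INR k - 1) * z ^ (m - k + 1))))).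
    + rewrite sum_mult_R. rewrite IH.
      replace (2 * S m)%nat with (S (S (2 * m))) by lia. cbn [Sy].
      rewrite Nat.sub_diag. rewrite !pow_O, Nat.add_0_l, pow_1. toR.
      replace (y * (y * Sy (2 * m) y + y / INR (S (2 * m))) + y / INR (S (S (2 * m))))
        with (y * y * Sy (2 * m) y + y * y / INR (S (2 * m)) + y / INR (S (S (2 * m))))
        by (unfold Rdiv; ring).
      rewrite Hy2. rewrite Hy.
      rewrite !INR_S', mult_INR. simpl (INR 2).
      pose proof (pos_INR m). field. lra.
    + intros k Hk. 
      replace (S m - k)%nat with (S (m - k)) by lia. simpl pow. unfold Rdiv. ring.
Qed.

Lemma odd_sum (y z : R) (m : nat) : y * y = 4 * z / 5 -> y = 2 * (1 + z) / 5 ->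
  8 / 25 * sum_n_m (fun k => (4 / 5) ^ (m - k) / (2 * INR k - 1)
     * ((14 * INR k - 5) / (4 * INR k) * z ^ (m + 1 - k) + z ^ (m + 2 - k))) 1 m
  + 2 * (1 + z) / (5 * INR (2 * m + 1))
  = Sy (2 * m + 1) y.
Proof.
  intros Hy2 Hy. induction m as [|m IH].
  - rewrite sum_n_m_zero by lia. simpl Sy. change zero with 0. rewrite Hy. simpl INR. toR. field.
  - rewrite sum_Sm_R by lia.
    rewrite (sum_ext_R (fun k => (4 / 5) ^ (S m - k) / (2 * INR k - 1)
     * ((14 * INR k - 5) / (4 * INR k) * z ^ (S m + 1 - k) + z ^ (S m + 2 - k)))
     (fun k => Rmult (4 * z / 5) ((4 / 5) ^ (m - k) / (2 * INR k - 1)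
     * ((14 * INR k - 5) / (4 * INR k) * z ^ (m + 1 - k) + z ^ (m + 2 - k))))).
    + rewrite sum_mult_R.
      replace (2 * S m + 1)%nat with (S (S (2 * m + 1))) by lia. cbn [Sy].
      rewrite <- IH. rewrite Nat.sub_diag.
      replace (S m + 1 - S m)%nat with 1%nat by lia.
      replace (S m + 2 - S m)%nat with 2%nat by lia. toR.
      set (SS := sum_n_m _ 1 m).
      transitivity (y * y * (8 / 25 * SS + 2 * (1 + z) / (5 * INR (2 * m + 1))) + y * y / INR (S (2 * m + 1)) + y / INR (S (S (2 * m + 1)))).
      2: unfold Rdiv; ring.
      rewrite Hy2. rewrite Hy.
      rewrite !INR_S', !plus_INR, mult_INR. simpl (INR 2). simpl (INR 1).
      pose proof (pos_INR m). field. lra.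
    + intros k Hk.
      replace (S m + 1 - k)%nat with (S (m + 1 - k)) by lia.
      replace (S m + 2 - k)%nat with (S (m + 2 - k)) by lia.
      replace (S m - k)%nat with (S (m - k)) by lia. simpl pow. unfold Rdiv. ring.
Qed.


Definition RHS1 (G : Z -> R) (t : Z) (p : nat) : R :=
  (harm p + ln 2) * 2 ^ (p + 1) * G (t + 2 * Z.of_nat p + 2)%Z
        + 2 ^ (p + 2) / sqrt 5
            * (G (t + 2 * Z.of_nat p + 3)%Z + G (t + 2 * Z.of_nat p + 1)%Z)
            * ln alpha
        - 2 ^ (p + 1)
            * sum_n_m (fun k : nat =>
                 G (t + 2 * Z.of_nat p - 2 * Z.of_nat k + 2)%Z / (2 ^ k * INR k)) 1 p.

Lemma PZa (r : R) (t : Z) (m : nat) : r <> 0 ->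
  powerRZ r (t + Z.of_nat m) = powerRZ r t * r ^ m.
Proof. intros H. rewrite powerRZ_add by auto. now rewrite <- pow_powerRZ. Qed.

Lemma PZz (r : R) (t : Z) (m : nat) : r <> 0 ->
  powerRZ r (t - Z.of_nat (2 * m)) = powerRZ r t * (/ (r * r)) ^ m.
Proof.
  intros H. unfold Z.sub. rewrite powerRZ_add by auto. rewrite powerRZ_neg'.
  rewrite <- pow_powerRZ. rewrite pow_mult, pow_inv. f_equal. f_equal. f_equal. simpl. ring.
Qed.

Lemma pow2_nz (n : nat) : 2 ^ n <> 0.
Proof. apply pow_nonzero. lra. Qed.

Lemma part1_r (r s : R) (t : Z) (p : nat) :
  r <> 0 ->
  (forall j, powerRZ r (j + 1) + powerRZ r (j - 1) = s * sqrt 5 * powerRZ r j) ->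
  Rabs (r / 2) < 1 -> / (1 - r / 2) = 2 * (r * r) ->
  ln (2 * (r * r)) = ln 2 + 2 * s * ln alpha ->
  is_series (fun n => binom (n + p) p * (harm n * powerRZ r (Z.of_nat n + t)) / 2 ^ n)
    (RHS1 (powerRZ r) t p).
Proof.
  intros Hr0 HF2 Hx1 Hy1 HL1.
  assert (HS := proj1 (series_F (r / 2) p Hx1)).
  assert (HS2 : is_series (fun n => powerRZ r t * (binom (n + p) p * harm n * (r / 2) ^ n))
      (powerRZ r t * Fc p (r / 2))) by exact (is_series_scal _ _ _ HS).
  replace (RHS1 (powerRZ r) t p) with (powerRZ r t * Fc p (r / 2)).
  - eapply is_series_ext_R; [|exact HS2]. intros n. cbv beta.
    rewrite (Z.add_comm (Z.of_nat n) t), PZa by auto. unfold Rdiv.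
    rewrite Rpow_mult_distr, pow_inv. ring.
  - unfold RHS1, Fc. rewrite Hy1, HL1, Sy_sum.
    replace (t + 2 * Z.of_nat p + 3)%Z with ((t + 2 * Z.of_nat p + 2) + 1)%Z by ring.
    replace (t + 2 * Z.of_nat p + 1)%Z with ((t + 2 * Z.of_nat p + 2) - 1)%Z by ring.
    rewrite HF2.
    rewrite (sum_ext_R (fun k => powerRZ r (t + 2 * Z.of_nat p - 2 * Z.of_nat k + 2) / (2 ^ k * INR k))
       (fun k => powerRZ r t / 2 ^ (p + 1) * ((2 * (r * r)) ^ (p + 1 - k) / INR k))).
    2:{ intros k Hk.
        replace (t + 2 * Z.of_nat p - 2 * Z.of_nat k + 2)%Z with (t + Z.of_nat (2 * (p + 1 - k)))%Z by lia.
        rewrite PZa by auto.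
        assert (E : 2 ^ (p + 1) = 2 ^ (p + 1 - k) * 2 ^ k) by (rewrite <- pow_add; f_equal; lia).
        rewrite E, Rpow_mult_distr, pow_mult.
        assert (INR k <> 0) by (apply not_0_INR; lia).
        pose proof (pow2_nz k). pose proof (pow2_nz (p + 1 - k)).
        replace (r ^ 2) with (r * r) by ring. field. auto. }
    rewrite sum_mult_R.
    replace (t + 2 * Z.of_nat p + 2)%Z with (t + Z.of_nat (2 * (p + 1)))%Z by lia.
    rewrite PZa by auto. rewrite Rpow_mult_distr, pow_mult.
    replace (r ^ 2) with (r * r) by ring.
    replace (2 ^ (p + 2)) with (2 * 2 ^ (p + 1)) by (replace (p + 2)%nat with (S (p + 1)) by lia; reflexivity).
    assert (sqrt 5 <> 0) by (apply Rgt_not_eq, sqrt_lt_R0; lra).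
    pose proof (pow2_nz (p + 1)).
    field. auto.
Qed.

Definition RHS2 (G : Z -> R) (t : Z) (p : nat) : R :=
  (2 / sqrt 5) ^ (p + 1)
          * ((harm p - ln (sqrt 5 / 2)) / sqrt 5
               * (G (t - Z.of_nat p)%Z + G (t - Z.of_nat p - 2)%Z)
             - G (t - Z.of_nat p - 1)%Z * ln alpha)
        - sum_n_m (fun k : nat =>
             (4 / 5) ^ (p / 2 - k) / (5 * INR k)
             * (G (t + 2 * Z.of_nat k - Z.of_nat p)%Z
                + (6 * INR k - 1) / (2 * INR k - 1)
                  * G (t + 2 * Z.of_nat k - Z.of_nat p - 2)%Z)) 1 (p / 2).

Definition RHS3 (G : Z -> R) (t : Z) (p : nat) : R :=
  (2 / sqrt 5) ^ (p + 1)
          * ((harm p - ln (sqrt 5 / 2)) * G (t - Z.of_nat p - 1)%Z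
             - ln alpha / sqrt 5
               * (G (t - Z.of_nat p)%Z + G (t - Z.of_nat p - 2)%Z))
        - 8 / 25
          * sum_n_m (fun k : nat =>
               (4 / 5) ^ ((p - 1) / 2 - k) / (2 * INR k - 1)
               * ((14 * INR k - 5) / (4 * INR k)
                    * G (t + 2 * Z.of_nat k - Z.of_nat p - 1)%Z
                  + G (t + 2 * Z.of_nat k - Z.of_nat p - 3)%Z)) 1 ((p - 1) / 2)
        - 2 * (G t + G (t - 2)%Z) / (5 * INR p).

Lemma alt_series (r : R) (t : Z) (p : nat) : r <> 0 -> Rabs (- r / 2) < 1 ->
  is_series (fun n => (-1) ^ n * binom (n + p) p * (harm n * powerRZ r (Z.of_nat n + t)) / 2 ^ n)
    (powerRZ r t * Fc p (- r / 2)).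
Proof.
  intros Hr0 Hx.
  assert (HS := proj1 (series_F (- r / 2) p Hx)).
  assert (HS2 : is_series (fun n => powerRZ r t * (binom (n + p) p * harm n * (- r / 2) ^ n))
      (powerRZ r t * Fc p (- r / 2))) by exact (is_series_scal _ _ _ HS).
  eapply is_series_ext_R; [|exact HS2]. intros n. cbv beta.
  rewrite (Z.add_comm (Z.of_nat n) t), PZa by auto. unfold Rdiv.
  replace (- r) with (-1 * r) by ring.
  rewrite !Rpow_mult_distr, pow_inv. ring.
Qed.

Lemma s_odd (s : R) (m : nat) : s * s = 1 -> s ^ (2 * m + 1) = s.
Proof.
  intros H. rewrite pow_add, pow_mult. replace (s ^ 2) with (s * s) by ring.
  rewrite H, pow1. ring.
Qed.

Lemma part2_r (r s : R) (t : Z) (m : nat) :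
  r <> 0 -> s * s = 1 ->
  (forall j, powerRZ r (j + 1) + powerRZ r (j - 1) = s * sqrt 5 * powerRZ r j) ->
  Rabs (- r / 2) < 1 ->
  / (1 - - r / 2) * / (1 - - r / 2) = 4 * / (r * r) / 5 ->
  / (1 - - r / 2) = 2 * (1 + / (r * r)) / 5 ->
  / (1 - - r / 2) = 2 * s / (sqrt 5 * r) ->
  ln (/ (1 - - r / 2)) = - ln (sqrt 5 / 2) - s * ln alpha ->
  is_series (fun n => (-1) ^ n * binom (n + 2 * m) (2 * m) * (harm n * powerRZ r (Z.of_nat n + t)) / 2 ^ n)
    (RHS2 (powerRZ r) t (2 * m)).
Proof.
  intros Hr0 Hss HF2 Hx Hya Hyb Hyc HL.
  replace (RHS2 (powerRZ r) t (2 * m)) with (powerRZ r t * Fc (2 * m) (- r / 2)).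
  { apply alt_series; auto. }
  unfold RHS2, Fc. set (y := / (1 - - r / 2)) in *. set (z := / (r * r)) in *.
  rewrite HL.
  replace ((2 * m) / 2)%nat with m by (rewrite Nat.mul_comm, Nat.div_mul; lia).
  rewrite <- (even_sum y z m Hya Hyb).
  set (u := (t - Z.of_nat (2 * m) - 1)%Z).
  replace (t - Z.of_nat (2 * m) - 2)%Z with (u - 1)%Z by (unfold u; ring).
  replace (t - Z.of_nat (2 * m))%Z with (u + 1)%Z by (unfold u; ring).
  rewrite HF2. unfold u.
  replace (t - Z.of_nat (2 * m) - 1)%Z with (t + - Z.of_nat (2 * m + 1))%Z by lia.
  rewrite powerRZ_add, powerRZ_neg', <- pow_powerRZ by auto.
  rewrite (sum_ext_R (fun k => (4 / 5) ^ (m - k) / (5 * INR k) *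
     (powerRZ r (t + 2 * Z.of_nat k - Z.of_nat (2 * m)) +
      (6 * INR k - 1) / (2 * INR k - 1) * powerRZ r (t + 2 * Z.of_nat k - Z.of_nat (2 * m) - 2)))
     (fun k => powerRZ r t * ((4 / 5) ^ (m - k) / (5 * INR k)
     * (z ^ (m - k) + (6 * INR k - 1) / (2 * INR k - 1) * z ^ (m - k + 1))))).
  2:{ intros k Hk.
      replace (t + 2 * Z.of_nat k - Z.of_nat (2 * m) - 2)%Z with (t - Z.of_nat (2 * (m - k + 1)))%Z by lia.
      replace (t + 2 * Z.of_nat k - Z.of_nat (2 * m))%Z with (t - Z.of_nat (2 * (m - k)))%Z by lia.
      rewrite !PZz by auto. fold z. ring. }
  rewrite sum_mult_R.
  rewrite Hyc. unfold Rdiv. rewrite !Rpow_mult_distr, !pow_inv, Rpow_mult_distr, (s_odd s m Hss).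
  toR. set (SS := sum_n_m _ 1 m).
  assert (sqrt 5 <> 0) by (apply Rgt_not_eq, sqrt_lt_R0; lra).
  assert (r ^ (2 * m + 1) <> 0) by (apply pow_nonzero; auto).
  assert (sqrt 5 ^ (2 * m + 1) <> 0) by (apply pow_nonzero; auto).
  replace (harm (2 * m) - ln (sqrt 5 * / 2)) with (harm (2 * m) - ln (sqrt 5 * / 2)) by reflexivity.
  transitivity (powerRZ r t * ((harm (2 * m) + - ln (sqrt 5 * / 2)) * s * (2 ^ (2 * m + 1) * / (sqrt 5 ^ (2 * m + 1) * r ^ (2 * m + 1)))
     - (s * s) * ln alpha * (2 ^ (2 * m + 1) * / (sqrt 5 ^ (2 * m + 1) * r ^ (2 * m + 1))) - SS)).
  - field; auto.
  - rewrite Hss. field; auto.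
Qed.

Lemma part3_r (r s : R) (t : Z) (m : nat) :
  r <> 0 -> s * s = 1 ->
  (forall j, powerRZ r (j + 1) + powerRZ r (j - 1) = s * sqrt 5 * powerRZ r j) ->
  Rabs (- r / 2) < 1 ->
  / (1 - - r / 2) * / (1 - - r / 2) = 4 * / (r * r) / 5 ->
  / (1 - - r / 2) = 2 * (1 + / (r * r)) / 5 ->
  ln (/ (1 - - r / 2)) = - ln (sqrt 5 / 2) - s * ln alpha ->
  is_series (fun n => (-1) ^ n * binom (n + (2 * m + 1)) (2 * m + 1)
       * (harm n * powerRZ r (Z.of_nat n + t)) / 2 ^ n)
    (RHS3 (powerRZ r) t (2 * m + 1)).
Proof.
  intros Hr0 Hss HF2 Hx Hya Hyb HL.
  replace (RHS3 (powerRZ r) t (2 * m + 1)) with (powerRZ r t * Fc (2 * m + 1) (- r / 2)).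
  { apply alt_series; auto. }
  unfold RHS3, Fc. set (y := / (1 - - r / 2)) in *. set (z := / (r * r)) in *.
  rewrite HL.
  replace ((2 * m + 1 - 1) / 2)%nat with m by (replace (2 * m + 1 - 1)%nat with (m * 2)%nat by lia;
     rewrite Nat.div_mul; lia).
  rewrite <- (odd_sum y z m Hya Hyb).
  set (u := (t - Z.of_nat (2 * m + 1) - 1)%Z).
  replace (t - Z.of_nat (2 * m + 1) - 2)%Z with (u - 1)%Z by (unfold u; ring).
  replace (t - Z.of_nat (2 * m + 1))%Z with (u + 1)%Z by (unfold u; ring).
  rewrite HF2. unfold u.
  replace (t - Z.of_nat (2 * m + 1) - 1)%Z with (t - Z.of_nat (2 * (m + 1)))%Z by lia.
  replace (t - 2)%Z with (t - Z.of_nat (2 * 1))%Z by reflexivity.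
  rewrite !PZz by auto. fold z.
  rewrite (sum_ext_R (fun k => (4 / 5) ^ (m - k) / (2 * INR k - 1) *
     ((14 * INR k - 5) / (4 * INR k) * powerRZ r (t + 2 * Z.of_nat k - Z.of_nat (2 * m + 1) - 1) +
      powerRZ r (t + 2 * Z.of_nat k - Z.of_nat (2 * m + 1) - 3)))
     (fun k => powerRZ r t * ((4 / 5) ^ (m - k) / (2 * INR k - 1)
     * ((14 * INR k - 5) / (4 * INR k) * z ^ (m + 1 - k) + z ^ (m + 2 - k))))).
  2:{ intros k Hk.
      replace (t + 2 * Z.of_nat k - Z.of_nat (2 * m + 1) - 3)%Z with (t - Z.of_nat (2 * (m + 2 - k)))%Z by lia.
      replace (t + 2 * Z.of_nat k - Z.of_nat (2 * m + 1) - 1)%Z with (t - Z.of_nat (2 * (m + 1 - k)))%Z by lia.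
      rewrite !PZz by auto. fold z. ring. }
  rewrite sum_mult_R. toR. set (SS := sum_n_m _ 1 m).
  replace (2 * m + 1 + 1)%nat with (2 * (m + 1))%nat by lia.
  rewrite !pow_mult. replace (y ^ 2) with (y * y) by ring. rewrite Hya.
  replace ((2 / sqrt 5) ^ 2) with (4 / 5).
  2:{ unfold Rdiv. rewrite Rpow_mult_distr, pow_inv. replace (sqrt 5 ^ 2) with (sqrt 5 * sqrt 5) by ring.
      rewrite sqrt_sqrt by lra. field. }
  replace (4 * z / 5) with (4 / 5 * z) by field. rewrite Rpow_mult_distr.
  assert (sqrt 5 <> 0) by (apply Rgt_not_eq, sqrt_lt_R0; lra).
  simpl (z ^ 1). simpl (1 + 1).
  transitivity (powerRZ r t * ((harm (2 * m + 1) + - ln (sqrt 5 / 2)) * ((4 / 5) ^ (m + 1) * z ^ (m + 1))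
     - s * ln alpha * ((4 / 5) ^ (m + 1) * z ^ (m + 1)) - (8 / 25 * SS + 2 * (1 + z) / (5 * INR (2 * m + 1))))).
  { ring. }
  assert (INR (2 * m + 1) <> 0) by (apply not_0_INR; lia).
  field; auto.
Qed.


Definition beta : R := (1 - sqrt 5) / 2.

Lemma s5_sq : sqrt 5 * sqrt 5 = 5.
Proof. apply sqrt_sqrt. lra. Qed.

Lemma s5_bounds : 2 < sqrt 5 < 3.
Proof.
  pose proof s5_sq. assert (0 < sqrt 5) by (apply sqrt_lt_R0; lra). nra.
Qed.

Lemma inv_from (a b : R) : a * b = 1 -> / a = b.
Proof.
  intros H. assert (a <> 0) by (intro; subst; lra).
  rewrite <- (Rmult_1_r (/ a)), <- H, <- Rmult_assoc, Rinv_l, Rmult_1_l; auto.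
Qed.

Lemma alpha_sq : alpha * alpha = alpha + 1.
Proof. unfold alpha. pose proof s5_sq. nra. Qed.

Lemma beta_sq : beta * beta = beta + 1.
Proof. unfold beta. pose proof s5_sq. nra. Qed.

Lemma alpha_pos : 1 < alpha.
Proof. unfold alpha. pose proof s5_bounds. lra. Qed.

Lemma beta_bounds : -1 < beta < 0.
Proof. unfold beta. pose proof s5_bounds. lra. Qed.

Lemma alpha_beta : alpha * beta = -1.
Proof. unfold alpha, beta. pose proof s5_sq. nra. Qed.

Lemma F2_gen (r s : R) : r <> 0 -> r + / r = s * sqrt 5 ->
  forall j, powerRZ r (j + 1) + powerRZ r (j - 1) = s * sqrt 5 * powerRZ r j.
Proof.
  intros Hr H j. unfold Z.sub. rewrite !powerRZ_add by auto.
  change (powerRZ r 1) with (r * 1). change (powerRZ r (- (1))) with (/ (r * 1)).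
  rewrite Rmult_1_r. rewrite <- H. ring.
Qed.


Lemma s5_nz : sqrt 5 <> 0.
Proof. pose proof s5_bounds. lra. Qed.

Lemma Hyc_gen (r s : R) : r * r = r + 1 -> s * sqrt 5 = 2 * r - 1 -> s * s = 1 -> r <> 0 -> 2 + r <> 0 ->
  / (1 - - r / 2) = 2 * s / (sqrt 5 * r).
Proof.
  intros H1 H2 H3 H4 H5. apply inv_from.
  assert (E : sqrt 5 = s * (2 * r - 1)) by (rewrite <- H2, <- Rmult_assoc, H3; ring).
  rewrite E. assert (E2 : s * (2 * r - 1) * r = s * (r + 2)) by (replace (s * (2 * r - 1) * r) with (s * (2 * (r * r) - r)) by ring; rewrite H1; ring).
  assert (s <> 0) by (intro; subst; lra).
  rewrite E2. field. split; auto. lra.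
Qed.

Lemma Hya_gen (r s : R) : s * s = 1 -> r <> 0 ->
  (2 * s / (sqrt 5 * r)) * (2 * s / (sqrt 5 * r)) = 4 * / (r * r) / 5.
Proof.
  intros H3 H4. pose proof s5_nz. pose proof s5_sq.
  replace ((2 * s / (sqrt 5 * r)) * (2 * s / (sqrt 5 * r))) with (4 * (s * s) / ((sqrt 5 * sqrt 5) * (r * r)))
    by (field; auto).
  rewrite H3, s5_sq. field. auto.
Qed.

Lemma Hyb_gen (r s : R) : r * r = r + 1 -> s * sqrt 5 = 2 * r - 1 -> s * s = 1 -> r <> 0 -> 2 + r <> 0 ->
  2 * s / (sqrt 5 * r) = 2 * (1 + / (r * r)) / 5.
Proof.
  intros H1 H2 H3 H4 H5.
  assert (E : sqrt 5 = s * (2 * r - 1)) by (rewrite <- H2, <- Rmult_assoc, H3; ring).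
  rewrite E. assert (E2 : s * (2 * r - 1) * r = s * (r + 2)) by (replace (s * (2 * r - 1) * r) with (s * (2 * (r * r) - r)) by ring; rewrite H1; ring).
  assert (s <> 0) by (intro; subst; lra).
  rewrite E2. rewrite H1. assert (r + 1 <> 0) by (rewrite <- H1; intro; apply H4; nra).
  field_simplify; [|auto|split; auto; lra].
  replace (2 * r + 4) with (2 * (r + 2)) by ring.
  replace (5 * r + 5) with ((r + 2) * (r + 2)) by nra. field. lra.
Qed.

Lemma facts_alpha :
  alpha <> 0 /\ 1 * 1 = 1 /\
  (forall j, powerRZ alpha (j + 1) + powerRZ alpha (j - 1) = 1 * sqrt 5 * powerRZ alpha j) /\
  Rabs (alpha / 2) < 1 /\ / (1 - alpha / 2) = 2 * (alpha * alpha) /\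
  ln (2 * (alpha * alpha)) = ln 2 + 2 * 1 * ln alpha /\
  Rabs (- alpha / 2) < 1 /\
  / (1 - - alpha / 2) * / (1 - - alpha / 2) = 4 * / (alpha * alpha) / 5 /\
  / (1 - - alpha / 2) = 2 * (1 + / (alpha * alpha)) / 5 /\
  / (1 - - alpha / 2) = 2 * 1 / (sqrt 5 * alpha) /\
  ln (/ (1 - - alpha / 2)) = - ln (sqrt 5 / 2) - 1 * ln alpha.
Proof.
  pose proof alpha_pos as Ha. pose proof alpha_sq as Hsq. pose proof s5_bounds as Hb.
  assert (Hs : 1 * sqrt 5 = 2 * alpha - 1) by (unfold alpha; field).
  assert (A2 : alpha < 2) by (unfold alpha; lra).
  assert (Hc := Hyc_gen alpha 1 Hsq Hs ltac:(ring) ltac:(lra) ltac:(lra)).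
  repeat split.
  - lra.
  - ring.
  - apply F2_gen. lra. rewrite (inv_from alpha (alpha - 1)); [lra|nra].
  - apply Rabs_def1; lra.
  - apply inv_from. nra.
  - rewrite !ln_mult by nra. ring.
  - apply Rabs_def1; lra.
  - rewrite Hc. apply Hya_gen. ring. lra.
  - rewrite Hc. apply Hyb_gen; auto; try ring; lra.
  - exact Hc.
  - rewrite Hc. replace (2 * 1 / (sqrt 5 * alpha)) with (/ (sqrt 5 / 2 * alpha)) by (field; lra).
    rewrite ln_Rinv, ln_mult; try nra; ring.
Qed.

Lemma facts_beta :
  beta <> 0 /\ -1 * -1 = 1 /\
  (forall j, powerRZ beta (j + 1) + powerRZ beta (j - 1) = -1 * sqrt 5 * powerRZ beta j) /\
  Rabs (beta / 2) < 1 /\ / (1 - beta / 2) = 2 * (beta * beta) /\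
  ln (2 * (beta * beta)) = ln 2 + 2 * -1 * ln alpha /\
  Rabs (- beta / 2) < 1 /\
  / (1 - - beta / 2) * / (1 - - beta / 2) = 4 * / (beta * beta) / 5 /\
  / (1 - - beta / 2) = 2 * (1 + / (beta * beta)) / 5 /\
  / (1 - - beta / 2) = 2 * -1 / (sqrt 5 * beta) /\
  ln (/ (1 - - beta / 2)) = - ln (sqrt 5 / 2) - -1 * ln alpha.
Proof.
  pose proof beta_bounds as Ha. pose proof beta_sq as Hsq. pose proof s5_bounds as Hb.
  pose proof alpha_pos as Hap. pose proof alpha_beta as Hab.
  assert (Hs : -1 * sqrt 5 = 2 * beta - 1) by (unfold beta; field).
  assert (Hc := Hyc_gen beta (-1) Hsq Hs ltac:(ring) ltac:(lra) ltac:(lra)).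
  assert (Hbi : - beta = / alpha) by (symmetry; apply inv_from; lra).
  assert (Hbb : beta * beta = / (alpha * alpha)).
  { rewrite Rinv_mult, <- Hbi. ring. }
  repeat split.
  - lra.
  - ring.
  - apply F2_gen. lra. rewrite (inv_from beta (beta - 1)); [lra|nra].
  - apply Rabs_def1; lra.
  - apply inv_from. nra.
  - rewrite ln_mult by nra. rewrite Hbb, ln_Rinv, ln_mult by nra. ring.
  - apply Rabs_def1; lra.
  - rewrite Hc. apply Hya_gen. ring. lra.
  - rewrite Hc. apply Hyb_gen; auto; try ring; lra.
  - exact Hc.
  - rewrite Hc. replace (2 * -1 / (sqrt 5 * beta)) with (/ (sqrt 5 / 2 * - beta)) by (field; lra).
    rewrite ln_Rinv, ln_mult; try nra. rewrite Hbi, ln_Rinv by lra. ring.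
Qed.


Definition bc1 (a b : R) := (b - a * beta) / sqrt 5.
Definition bc2 (a b : R) := (a * alpha - b) / sqrt 5.

Lemma gib_pos_binet (a b : R) (n : nat) :
  gib_pos a b n = (bc1 a b * alpha ^ n + bc2 a b * beta ^ n, bc1 a b * alpha ^ (S n) + bc2 a b * beta ^ (S n)).
Proof.
  pose proof s5_nz. induction n as [|n IH].
  - simpl. unfold bc1, bc2, alpha, beta. f_equal; field; auto.
  - simpl gib_pos. rewrite IH. f_equal.
    replace (alpha ^ S (S n)) with (alpha ^ n * (alpha * alpha)) by (simpl; ring).
    replace (beta ^ S (S n)) with (beta ^ n * (beta * beta)) by (simpl; ring).
    rewrite alpha_sq, beta_sq. simpl. ring.
Qed.

Lemma gib_neg_binet (a b : R) (n : nat) :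
  gib_neg a b n = (bc1 a b * / alpha ^ n + bc2 a b * / beta ^ n,
                   bc1 a b * alpha * / alpha ^ n + bc2 a b * beta * / beta ^ n).
Proof.
  pose proof s5_nz. pose proof alpha_pos. pose proof beta_bounds.
  assert (Ea : / alpha = alpha - 1) by (apply inv_from; pose proof alpha_sq; nra).
  assert (Eb : / beta = beta - 1) by (apply inv_from; pose proof beta_sq; nra).
  induction n as [|n IH].
  - simpl. rewrite Rinv_1. unfold bc1, bc2, alpha, beta. f_equal; field; auto.
  - simpl gib_neg. rewrite IH.
    assert (alpha ^ n <> 0) by (apply pow_nonzero; lra).
    assert (beta ^ n <> 0) by (apply pow_nonzero; lra).
    simpl pow. rewrite !Rinv_mult. f_equal.
    + rewrite Ea, Eb. ring.
    + field. lra.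
Qed.

Lemma gib_binet (a b : R) (j : Z) : gib a b j = bc1 a b * powerRZ alpha j + bc2 a b * powerRZ beta j.
Proof.
  destruct j as [|q|q].
  - change (gib a b 0) with (fst (gib_pos a b 0)). rewrite gib_pos_binet. simpl. ring.
  - unfold gib. rewrite gib_pos_binet. reflexivity.
  - unfold gib. rewrite gib_neg_binet. reflexivity.
Qed.

Lemma sum_plus_R (u v : nat -> R) (n m : nat) :
  sum_n_m (fun k => u k + v k) n m = sum_n_m u n m + sum_n_m v n m.
Proof. exact (sum_n_m_plus (G := R_AbelianMonoid) u v n m). Qed.

Lemma lin_sum (f g : nat -> R) (c1 c2 : R) (n m : nat) :
  sum_n_m (fun k => c1 * f k + c2 * g k) n m = c1 * sum_n_m f n m + c2 * sum_n_m g n m.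
Proof.
  rewrite (sum_plus_R (fun k => c1 * f k) (fun k => c2 * g k)), !sum_mult_R. reflexivity.
Qed.

Lemma RHS1_lin (G1 G2 : Z -> R) (c1 c2 : R) (t : Z) (p : nat) :
  RHS1 (fun j => c1 * G1 j + c2 * G2 j) t p = c1 * RHS1 G1 t p + c2 * RHS1 G2 t p.
Proof.
  unfold RHS1. cbv beta.
  rewrite (sum_ext_R _ (fun k => c1 * (G1 (t + 2 * Z.of_nat p - 2 * Z.of_nat k + 2)%Z / (2 ^ k * INR k))
     + c2 * (G2 (t + 2 * Z.of_nat p - 2 * Z.of_nat k + 2)%Z / (2 ^ k * INR k)))).
  - rewrite lin_sum. ring.
  - intros; unfold Rdiv; ring.
Qed.

Lemma RHS2_lin (G1 G2 : Z -> R) (c1 c2 : R) (t : Z) (p : nat) :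
  RHS2 (fun j => c1 * G1 j + c2 * G2 j) t p = c1 * RHS2 G1 t p + c2 * RHS2 G2 t p.
Proof.
  unfold RHS2. cbv beta.
  rewrite (sum_ext_R _ (fun k => c1 * ((4 / 5) ^ (p / 2 - k) / (5 * INR k)
             * (G1 (t + 2 * Z.of_nat k - Z.of_nat p)%Z
                + (6 * INR k - 1) / (2 * INR k - 1)
                  * G1 (t + 2 * Z.of_nat k - Z.of_nat p - 2)%Z))
     + c2 * ((4 / 5) ^ (p / 2 - k) / (5 * INR k)
             * (G2 (t + 2 * Z.of_nat k - Z.of_nat p)%Z
                + (6 * INR k - 1) / (2 * INR k - 1)
                  * G2 (t + 2 * Z.of_nat k - Z.of_nat p - 2)%Z)))).
  - rewrite lin_sum. ring.
  - intros; unfold Rdiv; ring.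
Qed.

Lemma RHS3_lin (G1 G2 : Z -> R) (c1 c2 : R) (t : Z) (p : nat) :
  RHS3 (fun j => c1 * G1 j + c2 * G2 j) t p = c1 * RHS3 G1 t p + c2 * RHS3 G2 t p.
Proof.
  unfold RHS3. cbv beta.
  rewrite (sum_ext_R _ (fun k => c1 * ((4 / 5) ^ ((p - 1) / 2 - k) / (2 * INR k - 1)
               * ((14 * INR k - 5) / (4 * INR k)
                    * G1 (t + 2 * Z.of_nat k - Z.of_nat p - 1)%Z
                  + G1 (t + 2 * Z.of_nat k - Z.of_nat p - 3)%Z))
     + c2 * ((4 / 5) ^ ((p - 1) / 2 - k) / (2 * INR k - 1)
               * ((14 * INR k - 5) / (4 * INR k)
                    * G2 (t + 2 * Z.of_nat k - Z.of_nat p - 1)%Z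
                  + G2 (t + 2 * Z.of_nat k - Z.of_nat p - 3)%Z)))).
  - rewrite lin_sum. unfold Rdiv. ring.
  - intros; unfold Rdiv; ring.
Qed.

Lemma ser_lin (u v w : nat -> R) (U V c1 c2 : R) :
  is_series u U -> is_series v V -> (forall n, w n = c1 * u n + c2 * v n) ->
  is_series w (c1 * U + c2 * V).
Proof.
  intros HU HV Hw.
  assert (H : is_series (fun n => c1 * u n + c2 * v n) (c1 * U + c2 * V))
    by exact (is_series_plus _ _ _ _ (is_series_scal c1 _ _ HU) (is_series_scal c2 _ _ HV)).
  eapply is_series_ext_R; [|exact H]. intros n. symmetry. apply Hw.
Qed.


Theorem theorem19 (a b : R) (t : Z) (hab : ~ (a = 0 /\ b = 0)) :
  (forall p : nat,
     is_series
       (fun n : nat => binom (n + p) p * (harm n * gib a b (Z.of_nat n + t)) / 2 ^ n)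
       ((harm p + ln 2) * 2 ^ (p + 1) * gib a b (t + 2 * Z.of_nat p + 2)
        + 2 ^ (p + 2) / sqrt 5
            * (gib a b (t + 2 * Z.of_nat p + 3) + gib a b (t + 2 * Z.of_nat p + 1))
            * ln alpha
        - 2 ^ (p + 1)
            * sum_n_m (fun k : nat =>
                 gib a b (t + 2 * Z.of_nat p - 2 * Z.of_nat k + 2) / (2 ^ k * INR k)) 1 p))
  /\
  (forall p : nat, Nat.Even p ->
     is_series
       (fun n : nat =>
          (-1) ^ n * binom (n + p) p * (harm n * gib a b (Z.of_nat n + t)) / 2 ^ n)
       ((2 / sqrt 5) ^ (p + 1)
          * ((harm p - ln (sqrt 5 / 2)) / sqrt 5
               * (gib a b (t - Z.of_nat p) + gib a b (t - Z.of_nat p - 2))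
             - gib a b (t - Z.of_nat p - 1) * ln alpha)
        - sum_n_m (fun k : nat =>
             (4 / 5) ^ (p / 2 - k) / (5 * INR k)
             * (gib a b (t + 2 * Z.of_nat k - Z.of_nat p)
                + (6 * INR k - 1) / (2 * INR k - 1)
                  * gib a b (t + 2 * Z.of_nat k - Z.of_nat p - 2))) 1 (p / 2)))
  /\
  (forall p : nat, Nat.Odd p ->
     is_series
       (fun n : nat =>
          (-1) ^ n * binom (n + p) p * (harm n * gib a b (Z.of_nat n + t)) / 2 ^ n)
       ((2 / sqrt 5) ^ (p + 1)
          * ((harm p - ln (sqrt 5 / 2)) * gib a b (t - Z.of_nat p - 1)
             - ln alpha / sqrt 5
               * (gib a b (t - Z.of_nat p) + gib a b (t - Z.of_nat p - 2)))
        - 8 / 25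
          * sum_n_m (fun k : nat =>
               (4 / 5) ^ ((p - 1) / 2 - k) / (2 * INR k - 1)
               * ((14 * INR k - 5) / (4 * INR k)
                    * gib a b (t + 2 * Z.of_nat k - Z.of_nat p - 1)
                  + gib a b (t + 2 * Z.of_nat k - Z.of_nat p - 3))) 1 ((p - 1) / 2)
        - 2 * (gib a b t + gib a b (t - 2)) / (5 * INR p))).
Proof.
  set (c1 := (b - a * beta) / sqrt 5).
  set (c2 := (a * alpha - b) / sqrt 5).
  assert (Hf : gib a b = fun j => c1 * powerRZ alpha j + c2 * powerRZ beta j).
  { apply functional_extensionality. intros j. rewrite gib_binet. reflexivity. }
  destruct facts_alpha as (A0 & A1 & A2 & A3 & A4 & A5 & A6 & A7 & A8 & A9 & A10).
  destruct facts_beta as (B0 & B1 & B2 & B3 & B4 & B5 & B6 & B7 & B8 & B9 & B10).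
  split; [|split].
  - intros p. change (is_series
       (fun n : nat => binom (n + p) p * (harm n * gib a b (Z.of_nat n + t)) / 2 ^ n)
       (RHS1 (gib a b) t p)).
    rewrite Hf, RHS1_lin.
    apply ser_lin with (u := fun n => binom (n + p) p * (harm n * powerRZ alpha (Z.of_nat n + t)) / 2 ^ n)
                       (v := fun n => binom (n + p) p * (harm n * powerRZ beta (Z.of_nat n + t)) / 2 ^ n).
    + apply part1_r with (s := 1); auto.
    + apply part1_r with (s := -1); auto.
    + intros n. unfold Rdiv. ring.
  - intros p [m ->]. change (is_series
       (fun n : nat =>
          (-1) ^ n * binom (n + 2 * m) (2 * m) * (harm n * gib a b (Z.of_nat n + t)) / 2 ^ n)
       (RHS2 (gib a b) t (2 * m))).
    rewrite Hf, RHS2_lin.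
    apply ser_lin with (u := fun n => (-1) ^ n * binom (n + 2 * m) (2 * m) * (harm n * powerRZ alpha (Z.of_nat n + t)) / 2 ^ n)
                       (v := fun n => (-1) ^ n * binom (n + 2 * m) (2 * m) * (harm n * powerRZ beta (Z.of_nat n + t)) / 2 ^ n).
    + apply part2_r with (s := 1); auto.
    + apply part2_r with (s := -1); auto.
    + intros n. unfold Rdiv. ring.
  - intros p [m ->]. change (is_series
       (fun n : nat =>
          (-1) ^ n * binom (n + (2 * m + 1)) (2 * m + 1) * (harm n * gib a b (Z.of_nat n + t)) / 2 ^ n)
       (RHS3 (gib a b) t (2 * m + 1))).
    rewrite Hf, RHS3_lin.
    apply ser_lin with (u := fun n => (-1) ^ n * binom (n + (2 * m + 1)) (2 * m + 1) * (harm n * powerRZ alpha (Z.of_nat n + t)) / 2 ^ n)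
                       (v := fun n => (-1) ^ n * binom (n + (2 * m + 1)) (2 * m + 1) * (harm n * powerRZ beta (Z.of_nat n + t)) / 2 ^ n).
    + apply part3_r with (s := 1); auto.
    + apply part3_r with (s := -1); auto.
    + intros n. unfold Rdiv. ring.
Qed.
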